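(* Let $\mathcal{O}\subset\mathbb{R}^{2}$ be an oval with support parametrization $\gamma$ and centrix $\mathbf{c}:S^{1}\to\mathbb{R}^{2}$. Then $\mathbf{c}$ coincides with the even part $\frac12(\gamma(\theta)+\gamma(\theta+\pi))$ of $\gamma$. Moreover $\mathbf{c}$ is constant if and only if $\mathcal{O}$ is central, and in that case, writing $\mathbf{c}$ for this constant, the odd part $\frac12(\gamma(\theta)-\gamma(\theta+\pi))$ of $\gamma$ support-parametrizes the origin-centered oval $\mathcal{O}-\mathbf{c}$.
   Context: Identify $\mathbb{R}^{2}\cong\mathbb{C}$. An oval is a $C^{2}$ embedded closed plane curve with nowhere-vanishing curvature; it is central if invariant under reflection through some point. A map $\gamma:S^{1}\to\mathbb{R}^{2}$ (viewed as $2\pi$-periodic on $\mathbb{R}$) support-parametrizes $\mathcal{O}$ if it parametrizes $\mathcal{O}$ and $\gamma'(\theta)=|\gamma'(\theta)|\,ie^{i\theta}$ for all $\theta$ (it is the inverse of the outer unit normal map). For $\theta$, the $\theta$-diameter of $\mathcal{O}$ is the segment joining the two points of $\mathcal{O}$ whose tangent lines are perpendicular to $e^{i\theta}$; $\mathbf{c}(\theta)$ is its midpoint, and the map $\mathbf{c}$ is the centrix. *)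

(* Defs.v *)
From Stdlib Require Import Reals.
From Coquelicot Require Import Coquelicot.
Open Scope R_scope.

Definition pt : Type := (R * R)%type.

Definition padd (p q : pt) : pt := (fst p + fst q, snd p + snd q).
Definition psub (p q : pt) : pt := (fst p - fst q, snd p - snd q).
Definition pscale (a : R) (p : pt) : pt := (a * fst p, a * snd p).
Definition pdot (p q : pt) : R := fst p * fst q + snd p * snd q.
Definition pnorm (p : pt) : R := sqrt (pdot p p).

(* e^{i theta} and i e^{i theta} *)
Definition expi (th : R) : pt := (cos th, sin th).
Definition iexpi (th : R) : pt := (- sin th, cos th).

Definition cx (g : R -> pt) (t : R) : R := fst (g t).
Definition cy (g : R -> pt) (t : R) : R := snd (g t).

Definition derivable2 (g : R -> pt) (t : R) : Prop :=
  ex_derive (cx g) t /\ ex_derive (cy g) t.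

Definition dcurve (g : R -> pt) (t : R) : pt :=
  (Derive (cx g) t, Derive (cy g) t).
Definition ddcurve (g : R -> pt) (t : R) : pt :=
  (Derive (Derive (cx g)) t, Derive (Derive (cy g)) t).

Definition C1_real (f : R -> R) : Prop :=
  forall t, ex_derive f t /\ continuous (Derive f) t.
Definition C2_real (f : R -> R) : Prop :=
  forall t, ex_derive f t /\ ex_derive (Derive f) t
            /\ continuous (Derive (Derive f)) t.
Definition C1_curve (g : R -> pt) : Prop := C1_real (cx g) /\ C1_real (cy g).
Definition C2_curve (g : R -> pt) : Prop := C2_real (cx g) /\ C2_real (cy g).

Definition pset : Type := pt -> Prop.

(* g : R -> R^2, L-periodic, parametrizes O, i.e. induces a bijection
   from the circle R/LZ onto O. *)
Definition parametrizes (L : R) (g : R -> pt) (O : pset) : Prop :=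
  0 < L /\
  (forall t, g (t + L) = g t) /\
  (forall s t, 0 <= s < L -> 0 <= t < L -> g s = g t -> s = t) /\
  (forall p, O p <-> exists t, g t = p).

Definition regular_param (L : R) (g : R -> pt) (O : pset) : Prop :=
  parametrizes L g O /\ C1_curve g /\ (forall t, dcurve g t <> (0, 0)).

(* Oval: C^2 embedded closed curve with nowhere-vanishing curvature
   (curvature = det(g',g'')/|g'|^3, so it vanishes iff det(g',g'') = 0). *)
Definition is_oval (O : pset) : Prop :=
  exists L g, regular_param L g O /\ C2_curve g /\
    (forall t, fst (dcurve g t) * snd (ddcurve g t)
               - snd (dcurve g t) * fst (ddcurve g t) <> 0).

Definition is_central (O : pset) : Prop :=
  exists z : pt, forall p, O p -> O (psub (pscale 2 z) p).

Definition support_param (O : pset) (gam : R -> pt) : Prop :=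
  parametrizes (2 * PI) gam O /\
  (forall th, derivable2 gam th) /\
  (forall th, dcurve gam th = pscale (pnorm (dcurve gam th)) (iexpi th)).

Definition tangent_at (O : pset) (p v : pt) : Prop :=
  exists L g t, regular_param L g O /\ g t = p /\ v = dcurve g t.

Definition tangent_perp (O : pset) (th : R) (p : pt) : Prop :=
  O p /\ exists v, tangent_at O p v /\ pdot v (expi th) = 0.

Definition midpoint (p q : pt) : pt := pscale (/ 2) (padd p q).

Definition is_centrix (O : pset) (c : R -> pt) : Prop :=
  forall th, exists p q : pt, p <> q /\
    (forall r, tangent_perp O th r <-> (r = p \/ r = q)) /\
    c th = midpoint p q.

Definition even_part (gam : R -> pt) (th : R) : pt :=
  pscale (/ 2) (padd (gam th) (gam (th + PI))).
Definition odd_part (gam : R -> pt) (th : R) : pt :=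
  pscale (/ 2) (psub (gam th) (gam (th + PI))).

Definition translate_neg (O : pset) (c : pt) : pset := fun p => O (padd p c).

(* Main.v *)
Require Import Defs.
From Stdlib Require Import Reals Lra Lia ZArith FunctionalExtensionality.
From Coquelicot Require Import Coquelicot.
Open Scope R_scope.

Lemma is_derive_lin (f g : R -> R) x a b e1 e2 :
  is_derive f x a -> is_derive g x b ->
  is_derive (fun u => f u * e1 + g u * e2) x (a * e1 + b * e2).
Proof.
  intros Hf Hg.
  apply (is_derive_plus (fun u => f u * e1) (fun u => g u * e2)).
  - apply (is_derive_scal_l f x a e1 Hf).
  - apply (is_derive_scal_l g x b e2 Hg).
Qed.

Lemma deriv_zero_max (f : R -> R) t l :
  is_derive f t l -> (forall u, f u <= f t) -> l = 0.
Proof.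
  intros Hd Hm. apply is_derive_Reals in Hd.
  pose (pr := exist (fun l => derivable_pt_lim f t l) l Hd : derivable_pt f t).
  change (derive_pt f t pr = 0).
  apply (deriv_maximum f (t-1) (t+1)); try lra.
  intros; apply Hm.
Qed.

Lemma deriv_zero_min (f : R -> R) t l :
  is_derive f t l -> (forall u, f t <= f u) -> l = 0.
Proof.
  intros Hd Hm.
  assert (H := is_derive_opp f t l Hd).
  assert (- l = 0). { apply (deriv_zero_max (fun x => - f x) t); [exact H|].
    intros u; specialize (Hm u); lra. }
  lra.
Qed.

Lemma periodic_nat (L : R) (g : R -> pt) :
  (forall t, g (t + L) = g t) -> forall n t, g (t + INR n * L) = g t.
Proof.
  intros Hp n; induction n as [|n IH]; intros t.
  - simpl. f_equal; ring.
  - rewrite S_INR. replace (t + (INR n + 1) * L) with ((t + INR n * L) + L) by ring.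
    rewrite Hp. apply IH.
Qed.

Lemma periodic_Z (L : R) (g : R -> pt) :
  (forall t, g (t + L) = g t) -> forall k t, g (t + IZR k * L) = g t.
Proof.
  intros Hp k t.
  destruct (Z_le_gt_dec 0 k) as [Hk|Hk].
  - rewrite <- (Z2Nat.id k Hk). rewrite <- INR_IZR_INZ. apply periodic_nat; auto.
  - assert (Hk' : (0 <= - k)%Z) by lia.
    replace k with (- Z.of_nat (Z.to_nat (- k)))%Z by lia.
    rewrite opp_IZR, <- INR_IZR_INZ.
    rewrite <- (periodic_nat L g Hp (Z.to_nat (- k)) (t + - INR (Z.to_nat (- k)) * L)).
    f_equal; ring.
Qed.

Lemma reduce (s a L : R) : 0 < L -> exists k : Z, a <= s + IZR k * L < a + L.
Proof.
  intros HL.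
  destruct (base_Int_part ((s - a) / L)) as [H1 H2].
  exists (- Int_part ((s - a) / L))%Z.
  rewrite opp_IZR. set (n := IZR (Int_part ((s - a) / L))) in *.
  assert (E : (s - a) = (s - a) / L * L) by (field; lra).
  split.
  - assert (n * L <= (s - a) / L * L) by (apply Rmult_le_compat_r; lra). lra.
  - assert ((s - a) / L * L < (n + 1) * L) by (apply Rmult_lt_compat_r; lra). lra.
Qed.

Lemma dcurve_comp (gam : R -> pt) u :
  dcurve gam u = pscale (pnorm (dcurve gam u)) (iexpi u) ->
  Derive (cx gam) u = pnorm (dcurve gam u) * - sin u /\
  Derive (cy gam) u = pnorm (dcurve gam u) * cos u.
Proof.
  intros H. unfold dcurve at 1 in H. unfold pscale, iexpi in H. simpl in H.
  injection H; intros; split; assumption.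
Qed.

Lemma maxlem (O : pset) (gam : R -> pt) :
  support_param O gam -> forall th s,
  pdot (gam s) (expi th) <= pdot (gam th) (expi th).
Proof.
  intros [[HL [Hp [Hinj HO]]] [Hd Heq]] th s.
  destruct (reduce s (th - PI) (2 * PI) HL) as [k Hk].
  rewrite <- (periodic_Z _ gam Hp k s).
  set (s' := s + IZR k * (2 * PI)) in *.
  set (f := fun u => cx gam u * cos th + cy gam u * sin th).
  assert (Hf : forall u, pdot (gam u) (expi th) = f u).
  { intros u; unfold f, pdot, cx, cy, expi; simpl; reflexivity. }
  rewrite !Hf.
  set (rho := fun u => pnorm (dcurve gam u)).
  set (df := fun u => rho u * sin (th - u)).
  assert (Hdf : forall u, is_derive f u (df u)).
  { intros u. destruct (Hd u) as [H1 H2].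
    destruct (dcurve_comp gam u (Heq u)) as [E1 E2].
    assert (Hr := is_derive_lin _ _ u _ _ (cos th) (sin th) (Derive_correct _ _ H1) (Derive_correct _ _ H2)).
    replace (df u) with (Derive (cx gam) u * cos th + Derive (cy gam) u * sin th).
    exact Hr. unfold df, rho. rewrite E1, E2, sin_minus. ring. }
  assert (Hc : forall u, continuity_pt f u).
  { intros u. apply derivable_continuous_pt.
    exists (df u). apply is_derive_Reals. apply Hdf. }
  assert (Hrho : forall u, 0 <= rho u) by (intros; unfold rho, pnorm; apply sqrt_pos).
  destruct (Rle_dec s' th) as [Hle|Hgt].
  - destruct (MVT_gen f s' th df) as [c [Hc1 Hc2]].
    + intros; apply Hdf.
    + intros; apply Hc.
    + rewrite Rmin_left in Hc1 by lra. rewrite Rmax_right in Hc1 by lra.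
      assert (0 <= df c).
      { unfold df. apply Rmult_le_pos; [apply Hrho| apply sin_ge_0; lra]. }
      assert (0 <= df c * (th - s')) by (apply Rmult_le_pos; lra). lra.
  - destruct (MVT_gen f th s' df) as [c [Hc1 Hc2]].
    + intros; apply Hdf.
    + intros; apply Hc.
    + rewrite Rmin_left in Hc1 by lra. rewrite Rmax_right in Hc1 by lra.
      assert (df c <= 0).
      { unfold df. replace (th - c) with (- (c - th)) by ring. rewrite sin_neg.
        assert (0 <= sin (c - th)) by (apply sin_ge_0; lra).
        assert (0 <= rho c * sin (c - th)) by (apply Rmult_le_pos; auto). lra. }
      assert (0 <= - df c * (s' - th)) by (apply Rmult_le_pos; lra). lra.
Qed.

Lemma minlem (O : pset) (gam : R -> pt) :
  support_param O gam -> forall th s,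
  pdot (gam (th + PI)) (expi th) <= pdot (gam s) (expi th).
Proof.
  intros H th s. assert (M := maxlem O gam H (th + PI) s).
  unfold pdot, expi in *. rewrite cos_plus, sin_plus, cos_PI, sin_PI in M. simpl in *. nra.
Qed.

Lemma distinct_pts (O : pset) (gam : R -> pt) :
  support_param O gam -> forall th, gam th <> gam (th + PI).
Proof.
  intros [[HL [Hp [Hinj HO]]] _] th E.
  destruct (reduce th 0 (2 * PI) HL) as [k Hk].
  rewrite <- (periodic_Z _ gam Hp k th) in E.
  rewrite <- (periodic_Z _ gam Hp k (th + PI)) in E.
  replace (th + PI + IZR k * (2 * PI)) with ((th + IZR k * (2*PI)) + PI) in E by ring.
  set (t := th + IZR k * (2 * PI)) in *.
  assert (HPI := PI_RGT_0).
  destruct (Rlt_dec t PI).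
  - assert (t = t + PI) by (apply Hinj; try lra; auto). lra.
  - assert (E2 : gam (t - PI) = gam (t + PI)).
    { replace (t + PI) with ((t - PI) + 2 * PI) by ring. symmetry; apply Hp. }
    rewrite <- E2 in E.
    assert (t = t - PI) by (apply Hinj; try lra; auto). lra.
Qed.

Lemma perp_of_extremal (O : pset) th r :
  is_oval O -> O r ->
  ((forall p, O p -> pdot p (expi th) <= pdot r (expi th)) \/
   (forall p, O p -> pdot r (expi th) <= pdot p (expi th))) ->
  tangent_perp O th r.
Proof.
  intros [L [g [[Hreg [HC1 Hnz]] [HC2 Hcurv]]]] Hr Hext.
  destruct Hreg as [HL [Hp [Hinj HO]]].
  destruct (proj1 (HO r) Hr) as [t Ht].
  split; [exact Hr|].
  exists (dcurve g t). split.
  - exists L, g, t. split; [split; [split; auto|split; auto]|split; auto].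
  - destruct HC1 as [C1x C1y].
    set (F := fun u => cx g u * cos th + cy g u * sin th).
    assert (HF : forall u, pdot (g u) (expi th) = F u).
    { intros u; unfold F, pdot, cx, cy, expi; simpl; reflexivity. }
    assert (Hd := is_derive_lin _ _ t _ _ (cos th) (sin th)
       (Derive_correct _ _ (proj1 (C1x t))) (Derive_correct _ _ (proj1 (C1y t)))).
    change (Derive (cx g) t * cos th + Derive (cy g) t * sin th = 0).
    destruct Hext as [H|H].
    + apply (deriv_zero_max F t _ Hd). intros u. rewrite <- !HF, Ht.
      apply H. apply HO. eauto.
    + apply (deriv_zero_min F t _ Hd). intros u. rewrite <- !HF, Ht.
      apply H. apply HO. eauto.
Qed.

Lemma part1 (O : pset) (gam : R -> pt) (c : R -> pt) :
  is_oval O -> support_param O gam -> is_centrix O c ->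
  forall th, c th = even_part gam th.
Proof.
  intros Hov Hsp Hc th.
  assert (Hsp' := Hsp). destruct Hsp' as [[HL [Hp [Hinj HO]]] _].
  destruct (Hc th) as [p [q [Hpq [Hiff Hmid]]]].
  assert (T1 : tangent_perp O th (gam th)).
  { apply perp_of_extremal; auto. apply HO; eauto.
    left. intros p' Hp'. destruct (proj1 (HO p') Hp') as [s <-]. apply (maxlem O); auto. }
  assert (T2 : tangent_perp O th (gam (th + PI))).
  { apply perp_of_extremal; auto. apply HO; eauto.
    right. intros p' Hp'. destruct (proj1 (HO p') Hp') as [s <-]. apply (minlem O); auto. }
  assert (D := distinct_pts O gam Hsp th).
  apply Hiff in T1. apply Hiff in T2.
  rewrite Hmid. unfold even_part, midpoint.
  destruct T1 as [E1|E1], T2 as [E2|E2]; rewrite E1, E2 in *; try congruence.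
  unfold padd. f_equal; f_equal; ring.
Qed.

Lemma pt_eq (p q : pt) : fst p = fst q -> snd p = snd q -> p = q.
Proof. destruct p, q; simpl; intros; subst; auto. Qed.

Lemma pdot_refl z b e : pdot (psub (pscale 2 z) b) e = 2 * pdot z e - pdot b e.
Proof. unfold pdot, psub, pscale; simpl; ring. Qed.

Lemma part2b (O : pset) (gam : R -> pt) (c : R -> pt) :
  is_oval O -> support_param O gam -> is_centrix O c ->
  is_central O -> exists c0 : pt, forall th, c th = c0.
Proof.
  intros Hov Hsp Hc [z Hz].
  assert (Hsp' := Hsp). destruct Hsp' as [[HL [Hp [Hinj HO]]] _].
  exists z. intros th.
  rewrite (part1 O gam c Hov Hsp Hc th). unfold even_part.
  set (a := gam th). set (b := gam (th + PI)). set (e := expi th).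
  assert (Oa : O a) by (apply HO; eauto).
  assert (Ob : O b) by (apply HO; eauto).
  assert (Mx : forall p, O p -> pdot p e <= pdot a e).
  { intros p' Hp'. destruct (proj1 (HO p') Hp') as [s <-]. apply (maxlem O); auto. }
  assert (Mn : forall p, O p -> pdot b e <= pdot p e).
  { intros p' Hp'. destruct (proj1 (HO p') Hp') as [s <-]. apply (minlem O); auto. }
  set (r := psub (pscale 2 z) b). set (r' := psub (pscale 2 z) a).
  assert (Or : O r) by (apply Hz; auto).
  assert (Or' : O r') by (apply Hz; auto).
  assert (Mr := Mx r Or). assert (Mr' := Mn r' Or').
  unfold r, r' in Mr, Mr'. rewrite pdot_refl in Mr, Mr'.
  assert (Tr : tangent_perp O th r).
  { apply perp_of_extremal; auto. left. intros p' Hp'.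
    assert (H := Mx p' Hp'). unfold r; rewrite pdot_refl. fold e. lra. }
  assert (Tr' : tangent_perp O th r').
  { apply perp_of_extremal; auto. right. intros p' Hp'.
    assert (H := Mn p' Hp'). unfold r'; rewrite pdot_refl. fold e. lra. }
  assert (Ta : tangent_perp O th a).
  { apply perp_of_extremal; auto. }
  assert (Tb : tangent_perp O th b).
  { apply perp_of_extremal; auto. }
  assert (D := distinct_pts O gam Hsp th). fold a b in D.
  destruct (Hc th) as [p [q [Hpq [Hiff _]]]].
  apply Hiff in Tr, Tr', Ta, Tb.
  assert (Hr : r = a \/ r = b) by (destruct Tr as [E1|E1], Ta as [E2|E2], Tb as [E3|E3]; first [left; congruence | right; congruence | exfalso; congruence]).
  assert (Hr' : r' = a \/ r' = b) by (destruct Tr' as [E1|E1], Ta as [E2|E2], Tb as [E3|E3]; first [left; congruence | right; congruence | exfalso; congruence]).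
  unfold r, r' in *. clearbody a b.
  destruct a as [a1 a2], b as [b1 b2], z as [z1 z2].
  unfold even_part, psub, pscale, padd in *; simpl in *.
  destruct Hr as [E|E], Hr' as [E'|E']; injection E; injection E'; intros;
  first [apply pt_eq; simpl; lra | exfalso; apply D; apply pt_eq; simpl; lra].
Qed.

Lemma shift_deriv (f : R -> R) k t : ex_derive f t ->
  is_derive (fun u => f u - k) t (Derive f t).
Proof.
  intros H.
  assert (H1 := is_derive_minus f (fun _ => k) t _ _ (Derive_correct _ _ H) (is_derive_const k t)).
  replace (Derive f t) with (minus (Derive f t) zero) by (rewrite minus_zero_r; reflexivity).
  exact H1.
Qed.

Lemma part3 (O : pset) (gam : R -> pt) (c : R -> pt) :
  is_oval O -> support_param O gam -> is_centrix O c ->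
  forall c0 : pt, (forall th, c th = c0) ->
     support_param (translate_neg O c0) (odd_part gam).
Proof.
  intros Hov Hsp Hc c0 Hc0.
  assert (Hsp' := Hsp). destruct Hsp' as [[HL [Hp [Hinj HO]]] [Hd Heq]].
  assert (Hodd : odd_part gam = fun th => psub (gam th) c0).
  { apply functional_extensionality; intros th.
    assert (E := part1 O gam c Hov Hsp Hc th). rewrite Hc0 in E.
    unfold odd_part, even_part in *. destruct (gam th) as [a1 a2], (gam (th + PI)) as [b1 b2], c0 as [z1 z2].
    unfold pscale, padd, psub in *; simpl in *. injection E; intros.
    apply pt_eq; simpl; lra. }
  rewrite Hodd.
  assert (Dx : forall t, is_derive (cx (fun th => psub (gam th) c0)) t (Derive (cx gam) t)).
  { intros t. apply (shift_deriv (cx gam) (fst c0) t). apply (Hd t). }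
  assert (Dy : forall t, is_derive (cy (fun th => psub (gam th) c0)) t (Derive (cy gam) t)).
  { intros t. apply (shift_deriv (cy gam) (snd c0) t). apply (Hd t). }
  assert (Dc : forall t, dcurve (fun th => psub (gam th) c0) t = dcurve gam t).
  { intros t. unfold dcurve. rewrite (is_derive_unique _ _ _ (Dx t)), (is_derive_unique _ _ _ (Dy t)). reflexivity. }
  split; [split; [exact HL| split; [|split]]|split].
  - intros t. rewrite Hp. reflexivity.
  - intros s t Hs Ht E. apply Hinj; auto.
    destruct (gam s) as [a1 a2], (gam t) as [b1 b2], c0 as [z1 z2].
    unfold psub in E; simpl in E. injection E; intros. apply pt_eq; simpl; lra.
  - intros p. unfold translate_neg. rewrite HO. split; intros [t Ht]; exists t.
    + rewrite Ht. destruct p, c0; unfold padd, psub; simpl; apply pt_eq; simpl; ring.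
    + rewrite <- Ht. destruct (gam t), c0; unfold padd, psub; simpl; apply pt_eq; simpl; ring.
  - intros t. split; eexists; [apply Dx|apply Dy].
  - intros t. rewrite Dc. apply Heq.
Qed.

Theorem mainTheorem13 (O : pset) (gam : R -> pt) (c : R -> pt) :
  is_oval O ->
  support_param O gam ->
  is_centrix O c ->
  (forall th, c th = even_part gam th) /\
  ((exists c0 : pt, forall th, c th = c0) <-> is_central O) /\
  (forall c0 : pt, (forall th, c th = c0) ->
     support_param (translate_neg O c0) (odd_part gam)).
Proof.
  intros Hov Hsp Hc.
  split; [apply (part1 O gam c); auto|split; [split|apply (part3 O gam c); auto]].
  - intros [c0 Hc0]. exists c0. intros p Hp.
    assert (Hsp' := Hsp). destruct Hsp' as [[HL [Hper [Hinj HO]]] _].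
    destruct (proj1 (HO p) Hp) as [t <-].
    apply HO. exists (t + PI).
    assert (E := part1 O gam c Hov Hsp Hc t). rewrite Hc0 in E.
    unfold even_part in E. destruct (gam t) as [a1 a2], (gam (t + PI)) as [b1 b2], c0 as [z1 z2].
    unfold pscale, padd, psub in *; simpl in *. injection E; intros.
    apply pt_eq; simpl; lra.
  - apply (part2b O gam c); auto.
Qed.
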